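(* Let $a(z)=\sum_{i\ge0}a_iz^i$ and $b(z)=\sum_{i\ge0}b_iz^i$ be rational series in $\mathbb{R}[[z]]$ satisfying (P1), (P2$_d$) and (P3$_{d+1}$) for a positive integer $d$. If $a(z)/(1-z)\le b(z)/(1-z)$ coefficientwise, then $\lim_{z\to1}a(z)(1-z)^d\le\lim_{z\to1}b(z)(1-z)^d$.
   Context: A rational series is the power series expansion at $z=0$ of a rational function regular at $0$; limits are taken for the rational function. For power series, $\sum c_iz^i\le\sum e_iz^i$ means $c_i\le e_i$ for all $i$. (P1): the rational function has poles only at roots of unity. (P2$_m$): $z=1$ is a pole of order exactly $m$. (P3$_m$): every pole other than $z=1$ has order less than $m$. *)

(* Defs.v *)
From HB Require Import structures.
From mathcomp Require Import all_boot all_order all_algebra.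
From mathcomp Require Import all_classical all_reals all_analysis.
From mathcomp Require Import complex.
Set Implicit Arguments. Unset Strict Implicit. Unset Printing Implicit Defensive.
Import Order.TTheory GRing.Theory Num.Theory.
Local Open Scope ring_scope.

Section RationalSeries.
Variable R : realType.

Local Notation CR := (complex.complex R).
Definition toC (p : {poly R}) : {poly CR} :=
  map_poly (complex.real_complex_def (Phant R)) p.

(* The rational function p/q (q(0) <> 0) has power series expansion a at 0:
   q(z) * a(z) = p(z) as formal power series. *)
Definition is_rat_series (p q : {poly R}) (a : nat -> R) : Prop :=
  q.[0] != 0 /\ forall n : nat, \sum_(k < n.+1) q`_k * a (n - k)%N = p`_n.

(* Order of the pole of p/q at the complex point w (0 if w is not a pole).
   It is independent of the chosen representation p/q. *)
Definition pole_order (p q : {poly R}) (w : CR) : nat :=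
  if p == 0 then 0%N else (mup w (toC q) - mup w (toC p))%N.

Definition P1 (p q : {poly R}) : Prop :=
  forall w : CR, (0 < pole_order p q w)%N -> exists2 n : nat, (0 < n)%N & w ^+ n = 1.

Definition P2 (m : nat) (p q : {poly R}) : Prop := pole_order p q 1 = m.

Definition P3 (m : nat) (p q : {poly R}) : Prop :=
  forall w : CR, w != 1 -> (0 < pole_order p q w)%N -> (pole_order p q w < m)%N.

End RationalSeries.

(* Main.v *)
Require Import Defs.
From HB Require Import structures.
From mathcomp Require Import all_boot all_order all_algebra.
From mathcomp Require Import all_classical all_reals all_analysis.
From mathcomp Require Import zify ring lra complex.
Import Order.TTheory GRing.Theory Num.Theory numFieldNormedType.Exports.
Local Open Scope classical_set_scope.
Local Open Scope ring_scope.
Set Implicit Arguments. Unset Strict Implicit. Unset Printing Implicit Defensive.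

Section Conv.
Variable R : fieldType.

Definition conv (q : {poly R}) (a : nat -> R) (n : nat) : R :=
  \sum_(k < n.+1) q`_k * a (n - k)%N.
Definition pser (a : nat -> R) (n : nat) : {poly R} := \poly_(i < n.+1) a i.

Lemma coefM_agree (q r r' : {poly R}) i :
  (forall j, (j <= i)%N -> r`_j = r'`_j) -> (q * r)`_i = (q * r')`_i.
Proof.
move=> H; rewrite !coefM; apply: eq_bigr => j _; rewrite H //.
exact: leq_subr.
Qed.

Lemma convE q a n : conv q a n = (q * pser a n)`_n.
Proof.
rewrite coefM /conv; apply: eq_bigr => k _.
by rewrite coef_poly ltnS leq_subr.
Qed.

Lemma conv_mul p q a n : conv (p * q) a n = conv p (conv q a) n.
Proof.
rewrite !convE -mulrA; apply: coefM_agree => j jn.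
rewrite coef_poly ltnS jn /= convE; apply: coefM_agree => k kj.
rewrite !coef_poly !ltnS kj (leq_trans kj jn) //.
Qed.

Lemma conv_poly q (p : {poly R}) n : conv q (fun i => p`_i) n = (q * p)`_n.
Proof.
rewrite convE; apply: coefM_agree => j jn.
by rewrite coef_poly ltnS jn.
Qed.

Lemma conv1 a n : conv 1 a n = a n.
Proof.
rewrite /conv big_ord_recl coef1 eqxx mul1r subn0 big1 ?addr0 // => i _.
by rewrite coef1 /= mul0r.
Qed.

Lemma convB q a b n : conv q (fun i => a i - b i) n = conv q a n - conv q b n.
Proof. by rewrite /conv -sumrB; apply: eq_bigr => k _; rewrite mulrBr. Qed.

Lemma conv_inj (q : {poly R}) (x y : nat -> R) : q`_0 != 0 ->
  (forall n, conv q x n = conv q y n) -> forall n, x n = y n.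
Proof.
move=> q0 H n; elim: n {-2}n (leqnn n) => [|m IH] n.
  rewrite leqn0 => /eqP ->; have := H 0%N.
  rewrite /conv !big_ord_recl !big_ord0 !addr0 !subn0.
  by move/(mulfI q0).
move=> nm; have := H n; rewrite /conv !big_ord_recl !subn0.
rewrite (eq_bigr (fun i : 'I_n => q`_(bump 0 i) * y (n - bump 0 i)%N)).
  by move/addIr/(mulfI q0).
move=> i _; rewrite IH //.
rewrite /bump /= ?add1n subnS; case: n nm {H} i => // n nm i /=.
lia.
Qed.

Lemma conv_1subXn m f n : (0 < m)%N ->
  conv (1 - 'X^m) f n = f n - (if (m <= n)%N then f (n - m)%N else 0).
Proof.
move=> m0; rewrite convE mulrBl mul1r coefB coefXnM coef_poly ltnSn.
rewrite ltnNge; case: leqP => //= mn; rewrite coef_poly.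
by rewrite ltnS leq_subr.
Qed.

End Conv.

Section PolyDiv.
Variable F : fieldType.

Lemma dvd_1subXn (N n : nat) : (1 - 'X^N : {poly F}) %| (1 - 'X^(N * n)).
Proof.
have -> : (1 - 'X^(N * n) : {poly F}) = - (('X^N) ^+ n - 1) by rewrite exprM opprB.
rewrite subrX1 -mulNr opprB dvdp_mulIl //.
Qed.

Lemma dvd_H (N n K K' : nat) :
  ((1 - 'X^N) ^+ K : {poly F}) %| (1 - 'X^(N * n)) ^+ (K + K').
Proof.
rewrite exprD; apply: dvdp_mulr; exact: dvdp_exp2r (dvd_1subXn _ _).
Qed.
End PolyDiv.

Section Closed.
Variable F : closedFieldType.

Lemma mupXsubC1 (x w : F) : mup x ('X - w%:P) = (if w == x then 1 else 0)%N.
Proof. by have := @mup_XsubCX F 1 x w; rewrite expr1. Qed.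

Lemma dvd_rootunity (p q : {poly F}) : p != 0 -> q != 0 ->
  (forall w, (mup w p < mup w q)%N -> exists2 n, (0 < n)%N & w ^+ n = 1) ->
  exists N K, (0 < N)%N /\ q %| p * (1 - 'X^N) ^+ K.
Proof.
move=> + + H; have [s] := ubnP (size q); elim: s p q H => // s IH p q H sq p0 q0.
have [/eqP sq1|] := eqVneq (size q) 1%N.
  exists 1%N, 0%N; split => //; have [c c0 ->] := size_poly1P _ sq1.
  by rewrite -[c%:P]mulr1 mul_polyC dvdpZl // dvd1p.
move/closed_rootP => [w]; move/factor_theorem => [q2 Dq].
have q20 : q2 != 0 by apply: contraNneq q0 => E; rewrite Dq E mul0r.
have sq2 : (size q2 < s)%N.
  by move: sq; rewrite Dq size_Mmonic ?monicXsubC // size_XsubC addn2.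
have [/factor_theorem [p2 Dp]| nr] := boolP (root p w).
  have p20 : p2 != 0 by apply: contraNneq p0 => E; rewrite Dp E mul0r.
  have [N [K [N0 dv]]] : exists N K, (0 < N)%N /\ q2 %| p2 * (1 - 'X^N) ^+ K.
    apply: IH => // w' lt; apply: H.
    rewrite Dp Dq !mupM ?polyXsubC_eq0 // mupXsubC1 ltn_add2r //.
  exists N, K; split => //; rewrite Dq Dp mulrAC.
  by apply: dvdp_mul.
have [n n0 wn] : exists2 n, (0 < n)%N & w ^+ n = 1.
  by apply: H; rewrite mupNroot // Dq mupM ?polyXsubC_eq0 // mupXsubC1 eqxx addn1.
have [N [K [N0 dv]]] : exists N K, (0 < N)%N /\ q2 %| p * (1 - 'X^N) ^+ K.
  apply: IH => // w' lt; apply: H.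
  rewrite Dq mupM ?polyXsubC_eq0 //; apply: (leq_trans lt); exact: leq_addr.
exists (N * n)%N, (K + 1)%N; split; first by rewrite muln_gt0 N0.
rewrite Dq exprD expr1 mulrA; apply: dvdp_mul.
  apply: (dvdp_trans dv); apply: dvdp_mul => //.
  by have := dvd_H F N n K 0; rewrite addn0.
rewrite dvdp_XsubCl /root !hornerE mulnC exprM wn expr1n subrr.
by [].
Qed.
End Closed.

Section TD. Variable R : realType.

Lemma geom_bound (y : R) M : 0 < y < 1 -> (M.+1)%:R * y ^+ M <= (1 - y)^-1.
Proof.
move=> /andP [y0 y1].
have S : (1 - y) * \sum_(n < M.+1) y ^+ n = 1 - y ^+ M.+1.
  elim: M => [|M IH]; first by rewrite big_ord1 expr0 mulr1 expr1.
  by rewrite big_ord_recr /= mulrDr IH (exprS y M.+1); ring.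
have le1 : (M.+1)%:R * y ^+ M <= \sum_(n < M.+1) y ^+ n.
  have -> : (M.+1)%:R * y ^+ M = \sum_(n < M.+1) y ^+ M
    by rewrite sumr_const card_ord mulr_natl.
  apply: ler_sum => i _.
  apply: ler_wiXn2l; [exact: ltW | exact: ltW | rewrite -ltnS //].
apply: (le_trans le1).
have y10 : 0 < 1 - y by rewrite subr_gt0.
rewrite -(ler_pM2l y10) mulrV ?unitfE ?gt_eqF // S gerBl.
by rewrite exprn_ge0 // ltW.
Qed.

Lemma poly_geom_bounded e : forall (z : R), 0 < z < 1 ->
  exists C, forall M, ((M.+1) ^ e)%:R * z ^+ M <= C.
Proof.
elim: e => [|e IH] z /andP [z0 z1].
  exists 1 => M; rewrite expn0 mul1r; apply: exprn_ile1; exact: ltW.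
set y := Num.sqrt z.
have yz : y ^+ 2 = z by rewrite sqr_sqrtr // ltW.
have y0 : 0 < y by rewrite sqrtr_gt0.
have y1 : y < 1 by rewrite -sqrtr1 ltr_sqrt.
have [C HC] := IH y (introT andP (conj y0 y1)).
exists (C * (1 - y)^-1) => M.
rewrite expnSr natrM -yz expr2 exprMn.
have -> : ((M.+1 ^ e)%:R * M.+1%:R * (y ^+ M * y ^+ M) : R) =
   (((M.+1 ^ e)%:R * y ^+ M) * ((M.+1)%:R * y ^+ M)) by ring.
apply: ler_pM => //.
- by rewrite mulr_ge0 // exprn_ge0 // ltW.
- by rewrite mulr_ge0 // exprn_ge0 // ltW.
- by apply: geom_bound; rewrite y0 y1.
Qed.

Lemma poly_geom_small e (z eps : R) M0 : 0 < z < 1 -> 0 < eps ->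
  exists M, (M0 <= M)%N /\ ((M.+1) ^ e)%:R * z ^+ M <= eps.
Proof.
move=> zz e0; have [C HC] := @poly_geom_bounded e.+1 z zz.
have C0 : 0 <= C by apply: le_trans (HC 0%N); rewrite mulr_ge0 // exprn_ge0 // ltW //; case/andP: zz.
set k := Num.Def.archi_bound (C / eps).
have hk : C / eps < k%:R by apply: archi_boundP; rewrite divr_ge0 // ltW.
exists (maxn M0 k); split; first exact: leq_maxl.
set M := maxn M0 k.
have := HC M; rewrite expnSr natrM.
have Mp : (0 : R) < (M.+1)%:R by rewrite ltr0n.
move=> H1.
have H2 : ((M.+1 ^ e)%:R * z ^+ M) <= C / (M.+1)%:R.
  rewrite ler_pdivlMr //; apply: le_trans H1; rewrite le_eqVlt; apply/orP; left; apply/eqP; ring.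
apply: (le_trans H2); rewrite ler_pdivrMr //.
have hk' : C < k%:R * eps by rewrite -ltr_pdivrMr.
apply: (le_trans (ltW hk')); rewrite mulrC ler_pM2l // ler_nat.
apply: leq_trans (leq_maxr M0 k) _; exact: leqnSn.
Qed.
End TD.

Section TE. Variable R : realType.

Lemma nat_ineq n m e : (0 < m)%N -> (m <= n)%N ->
  (n.+1 ^ e + (n - m).+1 ^ e.+1 <= n.+1 ^ e.+1)%N.
Proof.
move=> m0 mn.
have h1 : ((n - m).+1 ^ e.+1 <= n ^ e.+1)%N.
  rewrite leq_exp2r //; lia.
have h2 : (n ^ e.+1 <= n.+1 ^ e * n)%N.
  rewrite expnSr leq_mul2r; case: e {h1} => [|e]; first by rewrite !expn0 orbT.
  by rewrite leq_exp2r // leqnSn orbT.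
rewrite [X in (_ <= X)%N]expnSr mulnS; lia.
Qed.

Lemma growth1 m (f g : nat -> R) B e : (0 < m)%N ->
  (forall n, conv (1 - 'X^m) f n = g n) ->
  (forall n, `|g n| <= B * ((n.+1) ^ e)%:R) ->
  forall n, `|f n| <= B * ((n.+1) ^ e.+1)%:R.
Proof.
move=> m0 Hc Hg.
have B0 : 0 <= B.
  have := Hg 0%N; rewrite exp1n mulr1; apply: le_trans; exact: normr_ge0.
move=> n; elim: n {-2}n (leqnn n) => [|k IH] n.
  rewrite leqn0 => /eqP ->.
  have := Hc 0%N; rewrite conv_1subXn // leqNgt m0 subr0 => ->.
  by apply: (le_trans (Hg 0%N)); rewrite !exp1n.
move=> nk.
have Hf : f n = g n + (if (m <= n)%N then f (n - m)%N else 0).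
  by rewrite -Hc conv_1subXn // subrK.
rewrite Hf; case: ifP => mn.
  apply: (le_trans (ler_normD _ _)).
  have h := IH (n - m)%N ltac:(lia).
  apply: le_trans (lerD (Hg n) h) _.
  rewrite -mulrDr ler_wpM2l // -natrD ler_nat; exact: nat_ineq.
rewrite addr0; apply: (le_trans (Hg n)); rewrite ler_wpM2l // ler_nat.
rewrite expnS leq_pmull //.
Qed.

Lemma growthK N K : (0 < N)%N -> forall (f : nat -> R) B e,
  (forall n, `|conv ((1 - 'X^N) ^+ K) f n| <= B * ((n.+1) ^ e)%:R) ->
  forall n, `|f n| <= B * ((n.+1) ^ (e + K))%:R.
Proof.
move=> N0; elim: K => [|K IH] f B e H n.
  by have := H n; rewrite expr0 conv1 addn0.
rewrite addnS -addSn.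
apply: (@growth1 N f (conv (1 - 'X^N) f)) => // k.
apply: (IH (conv (1 - 'X^N) f)) => j.
by rewrite -conv_mul -exprSr; apply: H.
Qed.

Lemma coef_bound (p : {poly R}) i : `|p`_i| <= \sum_(j < size p) `|p`_j|.
Proof.
case: (ltnP i (size p)) => ip.
  rewrite (bigD1 (Ordinal ip)) //= lerDl sumr_ge0 // => j _.
by rewrite nth_default // normr0 sumr_ge0.
Qed.

Lemma pos_series (G U : {poly R}) (c : nat -> R) B e z :
  (forall n, 0 <= c n) -> (forall n, conv G c n = U`_n) ->
  (forall n, `|c n| <= B * ((n.+1) ^ e)%:R) ->
  0 <= G.[z] -> 0 < z < 1 -> 0 <= U.[z].
Proof.
move=> c0 HG Hc Gz zz; have /andP [z0 z1] := zz.
have B0 : 0 <= B.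
  have := Hc 0%N; rewrite exp1n mulr1; apply: le_trans; exact: normr_ge0.
rewrite leNgt; apply/negP => Uz.
set SG := \sum_(j < size G) `|G`_j|.
have SG0 : 0 <= SG by apply: sumr_ge0.
set sG := size G.
set K0 := SG * B * ((sG.+1) ^ 2)%:R.
have K00 : 0 <= K0 by rewrite !mulr_ge0.
set eps := - U.[z] / (K0 + 1).
have eps0 : 0 < eps by rewrite divr_gt0 // ?oppr_gt0 // ltr_wpDl.
have [M [UM HM]] := poly_geom_small (e + 2) (size U) zz eps0.
set P := pser c M.
set W := G * P - U.
set L := (sG + M)%N.
have sW : (size W <= L)%N.
  rewrite /W; apply: leq_trans (size_polyD _ _) _; rewrite size_polyN geq_max.
  apply/andP; split; last by apply: leq_trans UM _; exact: leq_addl.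
  apply: leq_trans (size_mul_leq _ _) _.
  have : (size P <= M.+1)%N by apply: size_poly.
  rewrite /L /sG; move: (size P) (size G) => a b; lia.
have cM : forall k, `|P`_k| <= B * ((M.+1) ^ e)%:R.
  move=> k; rewrite coef_poly; case: ifP => kM; last by rewrite normr0 mulr_ge0.
  apply: (le_trans (Hc k)); rewrite ler_wpM2l // ler_nat.
  case: e {Hc HM} => [|e]; first by rewrite !expn0.
  by rewrite leq_exp2r.
set T := L%:R * (SG * (B * ((M.+1) ^ e)%:R)) * z ^+ M.
have Wi : forall i, (i < L)%N -> `|W`_i * z ^+ i| <= T.
  move=> i iL; rewrite normrM normrX (ger0_norm (ltW z0)).
  have T0 : 0 <= T by rewrite !mulr_ge0 // exprn_ge0 // ltW.
  case: (leqP i M) => iM.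
    have -> : W`_i = 0.
      rewrite /W coefB -HG convE; apply/eqP; rewrite subr_eq0; apply/eqP.
      apply: coefM_agree => j ji; rewrite !coef_poly !ltnS ji.
      by rewrite (leq_trans ji iM).
    by rewrite normr0 mul0r.
  have -> : W`_i = (G * P)`_i.
    by rewrite /W coefB (nth_default 0 (leq_trans UM (ltnW iM))) subr0.
  apply: ler_pM; [exact: normr_ge0 | by rewrite exprn_ge0 // ltW | |].
  - rewrite coefM; apply: (le_trans (ler_norm_sum _ _ _)).
    apply: le_trans (_ : \sum_(j < i.+1) (SG * (B * ((M.+1) ^ e)%:R)) <= _).
      apply: ler_sum => j _; rewrite normrM; apply: ler_pM => //.
      exact: coef_bound.
    rewrite sumr_const card_ord -[_ *+ i.+1]mulr_natl; apply: ler_pM => //; first by rewrite !mulr_ge0.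
    by rewrite ler_nat.
  - apply: ler_wiXn2l; [exact: ltW | exact: ltW | exact: ltnW].
have HW : `|W.[z]| <= L%:R * T.
  rewrite (horner_coef_wide z sW); apply: (le_trans (ler_norm_sum _ _ _)).
  apply: le_trans (_ : \sum_(i < L) T <= _).
    by apply: ler_sum => i _; apply: Wi.
  by rewrite sumr_const card_ord mulr_natl.
have HT : L%:R * T <= K0 * eps.
  have LM : (L <= sG.+1 * M.+1)%N by rewrite /L; nia.
  apply: le_trans (_ : K0 * (((M.+1) ^ (e + 2))%:R * z ^+ M) <= _); last first.
    by rewrite ler_wpM2l.
  rewrite /T /K0 expnD natrM.
  have : (L%:R : R) ^+ 2 <= (sG.+1 ^ 2)%:R * ((M.+1) ^ 2)%:R.
    by rewrite -natrX -natrM ler_nat -expnMn leq_exp2r.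
  have zM : 0 <= z ^+ M by rewrite exprn_ge0 // ltW.
  move=> h.
  have h' : L%:R * (L%:R * (SG * (B * ((M.+1) ^ e)%:R)) * z ^+ M) =
    (L%:R ^+ 2) * ((SG * B) * ((M.+1) ^ e)%:R * z ^+ M) by ring.
  rewrite h'; apply: le_trans (ler_wpM2r _ h) _.
    by rewrite !mulr_ge0.
  rewrite le_eqVlt; apply/orP; left; apply/eqP; ring.
have Kl : K0 * eps < - U.[z].
  rewrite /eps mulrA ltr_pdivrMr ?ltr_wpDl //.
  rewrite mulrC ltr_pM2l ?oppr_gt0 //; by rewrite ltrDl.
have PZ : 0 <= P.[z].
  rewrite horner_poly; apply: sumr_ge0 => i _; apply: mulr_ge0 => //; exact: exprn_ge0 (ltW z0).
have : - U.[z] <= `|W.[z]|.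
  apply: le_trans (ler_norm _); rewrite /W !hornerE lerDr.
  exact: (mulr_ge0 Gz PZ).
move=> h; have := lt_le_trans Kl (le_trans h (le_trans HW HT)).
by rewrite ltxx.
Qed.
End TE.

Section F. Variable R : realType.
Local Notation CR := (complex.complex R).

Lemma toC_XsubC1 m : toC (('X - 1%:P) ^+ m : {poly R}) = ('X - 1%:P) ^+ m.
Proof. by rewrite /toC rmorphXn /= map_polyXsubC rmorph1. Qed.

Lemma mup_toC1 (p p1 : {poly R}) m : ~~ root p1 1 -> p = p1 * ('X - 1%:P) ^+ m ->
  mup (1 : CR) (toC p) = m.
Proof.
move=> np1 ->; rewrite /toC rmorphM /= rmorphXn /= map_polyXsubC rmorph1 mupMr.
  by rewrite mup_XsubCX eqxx.
have -> : (1 : CR) = complex.real_complex_def (Phant R) 1 by rewrite rmorph1.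
by rewrite fmorph_root.
Qed.

Lemma real_dvd (pa qa : {poly R}) : pa != 0 -> qa != 0 -> P1 pa qa ->
  exists N K, (0 < N)%N /\ qa %| pa * (1 - 'X^N) ^+ K.
Proof.
move=> pa0 qa0 HP.
have [N [K [N0 dv]]] := @dvd_rootunity _ (toC pa) (toC qa)
   ltac:(by rewrite map_poly_eq0) ltac:(by rewrite map_poly_eq0)
   ltac:(move=> w lt; apply: HP; rewrite /pole_order (negbTE pa0) subn_gt0 //).
exists N, K; split => //.
rewrite -(dvdp_map (complex.real_complex_def (Phant R))) -/(toC _) -/(toC _).
by rewrite /toC rmorphM rmorphXn rmorphB rmorph1 /= map_polyXn.
Qed.

Lemma rat_lim (p q : {poly R}) d : p != 0 -> q != 0 -> pole_order p q 1 = d ->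
  (0 < d)%N ->
  exists L : R, ((fun z : R => p.[z] / q.[z] * (1 - z) ^+ d) @ (1 : R)^' --> L) /\
   (\forall z \near (1 : R), z != 1 -> q.[z] != 0).
Proof.
move=> p0 q0 Hd d0.
have [mp [p1 /implyP/(_ p0) np1 Dp]] := multiplicity_XsubC p 1.
have [mq [q1 /implyP/(_ q0) nq1 Dq]] := multiplicity_XsubC q 1.
move: Hd; rewrite /pole_order (negbTE p0) (mup_toC1 np1 Dp) (mup_toC1 nq1 Dq) => Hd.
have Emq : mq = (mp + d)%N by lia.
set g := fun z : R => (-1) ^+ d * (p1.[z] / q1.[z]).
have q11 : q1.[1] != 0 by [].
have gc : g @ (1 : R) --> g 1.
  apply: cvgM; first exact: cvg_cst.
  apply: cvgM; first exact: continuous_horner.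
  exact: (cvgV q11 (@continuous_horner _ q1 1)).
exists (g 1); split.
  apply: (cvg_trans _ (cvg_within_filter _ gc)).
  apply: near_eq_cvg; rewrite near_withinE; apply: nearW => z /= z1.
  rewrite /g Dp Dq Emq !hornerM !horner_exp !hornerXsubC exprD.
  have zz : z - 1 != 0 by rewrite subr_eq0.
  have [->|qz] := eqVneq q1.[z] 0; first by rewrite !(mul0r, invr0, mulr0).
  have -> : 1 - z = - (z - 1) by rewrite opprB.
  rewrite (exprNn (z - 1)); field.
  by rewrite qz !expf_neq0.
have Hn := cvgr_neq0 _ (@continuous_horner _ q1 1) q11.
near=> z => z1.
rewrite Dq hornerM horner_exp hornerXsubC mulf_neq0 //; last first.
  by rewrite expf_neq0 // subr_eq0.
near: z; exact: Hn.
Unshelve. all: end_near.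
Qed.
End F.

Lemma conv_ext (R : fieldType) (q : {poly R}) f g n :
  (forall i, f i = g i) -> conv q f n = conv q g n.
Proof. by move=> H; apply: eq_bigr => k _; rewrite H. Qed.

Unset Implicit Arguments.

Theorem lemma4p4 (R : realType) (d : nat) (pa qa pb qb : {poly R}) (a b : nat -> R) :
  (0 < d)%N ->
  is_rat_series pa qa a -> is_rat_series pb qb b ->
  P1 pa qa -> P2 d pa qa -> P3 d.+1 pa qa ->
  P1 pb qb -> P2 d pb qb -> P3 d.+1 pb qb ->
  (* a(z)/(1-z) <= b(z)/(1-z) coefficientwise: partial sums *)
  (forall n : nat, \sum_(i < n.+1) a i <= \sum_(i < n.+1) b i) ->
  lim ((fun z : R => pa.[z] / qa.[z] * (1 - z) ^+ d) @ (1 : R)^') <=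
  lim ((fun z : R => pb.[z] / qb.[z] * (1 - z) ^+ d) @ (1 : R)^').
Proof.
move=> d0 [qa0' ra] [qb0' rb] P1a P2a _ P1b P2b _ Hab.
have pa0 : pa != 0.
  apply/negP => /eqP E; move: P2a; rewrite /P2 /pole_order E eqxx => E'.
  by rewrite -E' in d0.
have pb0 : pb != 0.
  apply/negP => /eqP E; move: P2b; rewrite /P2 /pole_order E eqxx => E'.
  by rewrite -E' in d0.
have qa0 : qa != 0 by apply: contraNneq qa0' => ->; rewrite horner0.
have qb0 : qb != 0 by apply: contraNneq qb0' => ->; rewrite horner0.
have [Na [Ka [Na0 dva]]] := real_dvd pa0 qa0 P1a.
have [Nb [Kb [Nb0 dvb]]] := real_dvd pb0 qb0 P1b.
set N := (Na * Nb)%N; set K := (Ka + Kb)%N.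
have N0 : (0 < N)%N by rewrite muln_gt0 Na0.
set H : {poly R} := (1 - 'X^N) ^+ K.
have dva' : qa %| pa * H.
  apply: (dvdp_trans dva); apply: dvdp_mul => //; exact: dvd_H.
have dvb' : qb %| pb * H.
  apply: (dvdp_trans dvb); apply: dvdp_mul => //.
  rewrite /H /N /K mulnC addnC; exact: dvd_H.
set Ua := pa * H %/ qa; set Ub := pb * H %/ qb.
have EUa : Ua * qa = pa * H by rewrite divpK.
have EUb : Ub * qb = pb * H by rewrite divpK.
have convH : forall (p q U : {poly R}) (x : nat -> R), q.[0] != 0 ->
    (forall n, \sum_(k < n.+1) q`_k * x (n - k)%N = p`_n) -> U * q = p * H ->
    forall n, conv H x n = U`_n.
  move=> p q U x q0 rx EU; apply: (@conv_inj _ q); first by rewrite -horner_coef0.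
  move=> n; rewrite -conv_mul mulrC conv_mul (@conv_ext _ H (conv q x) (fun i => p`_i) n rx) conv_poly.
  rewrite (_ : conv q (nth 0 U) n = (q * U)`_n); last exact: conv_poly.
  by rewrite [q * U]mulrC EU mulrC.
have cHa := convH _ _ _ _ qa0' ra EUa.
have cHb := convH _ _ _ _ qb0' rb EUb.
set c := fun n => \sum_(i < n.+1) (b i - a i).
have c0 : forall n, 0 <= c n.
  by move=> n; rewrite /c sumrB subr_ge0.
have c1 : forall n, conv (1 - 'X^1) c n = b n - a n.
  move=> n; rewrite conv_1subXn //; case: n => [|n]; first by rewrite /c big_ord1 subr0.
  by rewrite /= subn1 /= /c big_ord_recr /= addrAC subrr add0r.
set U := Ub - Ua.
have cU : forall n, conv (H * (1 - 'X^1)) c n = U`_n.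
  move=> n; rewrite conv_mul (@conv_ext _ H _ (fun i => b i - a i) n c1) convB cHa cHb coefB //.
have cb : forall n, `|c n| <= (\sum_(j < size U) `|U`_j|) * ((n.+1) ^ K.+1)%:R.
  apply: (@growth1 _ 1 c (conv (1 - 'X^1) c)) => // n.
  have := @growthK _ N K N0 (conv (1 - 'X^1) c) (\sum_(j < size U) `|U`_j|) 0.
  rewrite add0n; apply => k.
  by rewrite -conv_mul cU expn0 mulr1 coef_bound.
have Hpos : forall z : R, 0 < z < 1 -> 0 < H.[z].
  move=> z /andP [z0 z1]; rewrite /H horner_exp !hornerE exprn_gt0 // subr_gt0.
  by rewrite exprn_ilt1 // ?ltW // -lt0n.
have Upos : forall z : R, 0 < z < 1 -> 0 <= U.[z].
  move=> z zz; apply: (pos_series c0 cU cb) => //.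
  rewrite hornerM; apply: mulr_ge0; first exact: ltW (Hpos z zz).
  have /andP [_ z1] := zz; rewrite !hornerE subr_ge0; exact: ltW.
have [La [cva nqa]] := rat_lim pa0 qa0 P2a d0.
have [Lb [cvb nqb]] := rat_lim pb0 qb0 P2b d0.
rewrite (cvg_lim _ cva) // (cvg_lim _ cvb) //.
rewrite -subr_ge0.
set h := fun z : R => pb.[z] / qb.[z] * (1 - z) ^+ d - pa.[z] / qa.[z] * (1 - z) ^+ d.
have ch : h @ (1 : R)^'- --> Lb - La.
  apply: cvg_dnbhs_at_left; exact: cvgB cvb cva.
rewrite -(cvg_lim _ ch) //.
apply: limr_ge; first by apply/cvg_ex; exists (Lb - La).
have z0n : \forall z \near (1 : R), 0 < z.
  exact: (@cvgr_gt _ _ _ _ id 1 cvg_id 0 ltr01).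
rewrite near_withinE; near=> z => /= z1.
have zz : 0 < z < 1 by rewrite z1 andbT; near: z; exact: z0n.
have z1' : z != 1 by rewrite lt_eqF.
have qaz : qa.[z] != 0.
  have : z != 1 -> qa.[z] != 0 by near: z; exact: nqa.
  by apply.
have qbz : qb.[z] != 0.
  have : z != 1 -> qb.[z] != 0 by near: z; exact: nqb.
  by apply.
have Hz := Hpos z zz.
have Hz0 : H.[z] != 0 by rewrite gt_eqF.
have ea : pa.[z] / qa.[z] = Ua.[z] / H.[z].
  apply/eqP; rewrite eqr_div //; apply/eqP.
  by rewrite -!hornerM -EUa hornerM.
have eb : pb.[z] / qb.[z] = Ub.[z] / H.[z].
  apply/eqP; rewrite eqr_div //; apply/eqP.
  by rewrite -!hornerM -EUb hornerM.
rewrite /h ea eb -mulrBl -mulrBl (_ : Ub.[z] - Ua.[z] = U.[z]); last by rewrite /U !hornerE.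
apply: mulr_ge0; first by apply: divr_ge0; [exact: Upos | exact: ltW].
by rewrite exprn_ge0 // subr_ge0 ltW.
Unshelve. all: end_near.
Qed.
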